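(* Let $\mathcal H$ be a complex Hilbert space and $A,B,X\in\mathcal B(\mathcal H)$ with $B\neq0$ and $X$ positive. Let $\{x_n\}\subset\mathcal H$ with $\|x_n\|=1$ and $w(AXB)=\lim_{n\to\infty}|\langle AXBx_n,x_n\rangle|$. Then $$w(AXB)\le\frac{\|X\|}{2}\left(\big\||A^*|^2+|B|^2\big\|-\lim_{n\to\infty}\frac{\|A^*x_n\|}{2\|Bx_n\|}\inf_{\lambda\in\mathbb C}\|(B-\lambda A^* )x_n\|^2\right)\le\frac{\|X\|}{2}\big\||A^*|^2+|B|^2\big\|$$ (the limit being assumed to exist). In particular, taking $X=I$, $$w(AB)\le\frac12\big\||A^*|^2+|B|^2\big\|-\lim_{n\to\infty}\frac{\|A^*x_n\|}{4\|Bx_n\|}\inf_{\lambda\in\mathbb C}\|(B-\lambda A^* )x_n\|^2\le\frac12\big\||A^*|^2+|B|^2\big\|,$$ where now $\{x_n\}$ is a sequence of unit vectors with $w(AB)=\lim_n|\langle ABx_n,x_n\rangle|$.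
   Context: $|S|=(S^*S)^{1/2}$ for $S\in\mathcal B(\mathcal H)$; $\|\cdot\|$ is the operator norm; $w(S)=\sup\{|\langle Sx,x\rangle|:\|x\|=1\}$ is the numerical radius. *)

(* Defs.v *)
From HB Require Import structures.
From mathcomp Require Import all_boot all_order all_algebra.
From mathcomp Require Import all_classical all_reals all_analysis.
From mathcomp Require Export complex.
Set Implicit Arguments. Unset Strict Implicit. Unset Printing Implicit Defensive.
Import Order.TTheory GRing.Theory Num.Theory.
Import numFieldNormedType.Exports.
Local Open Scope ring_scope.
Local Open Scope classical_set_scope.

Section Hilbert.
Variables (R : realType) (H : lmodType R[i]) (ip : H -> H -> R[i]).

Definition is_inner_product : Prop :=
  [/\ (forall (a : R[i]) (x y z : H), ip (a *: x + y) z = a * ip x z + ip y z),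
      (forall x y : H, ip x y = conjc (ip y x)),
      (forall x : H, 0 <= ip x x) &
      (forall x : H, ip x x = 0 -> x = 0)].

Definition hnorm (x : H) : R := Num.sqrt (complex.Re (ip x x)).

Definition hcomplete : Prop :=
  forall u : nat -> H,
    (forall e : R, 0 < e -> exists N : nat, forall m n : nat,
        (N <= m)%N -> (N <= n)%N -> hnorm (u m - u n) < e) ->
    exists l : H, (fun n => hnorm (u n - l)) @ \oo --> (0 : R).

Definition bounded_op (T : H -> H) : Prop :=
  (forall (a : R[i]) (x y : H), T (a *: x + y) = a *: T x + T y) /\
  exists M : R, forall x : H, hnorm (T x) <= M * hnorm x.

Definition is_adjoint (T S : H -> H) : Prop :=
  forall x y : H, ip (T x) y = ip x (S y).

Definition positive_op (T : H -> H) : Prop :=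
  forall x : H, 0 <= ip (T x) x.

Definition unit_sphere : set H := [set x | hnorm x = 1].

Definition opnorm (T : H -> H) : R :=
  sup [set hnorm (T x) | x in unit_sphere].

Definition numrad (T : H -> H) : R :=
  sup [set ComplexField.Normc.normc (ip (T x) x) | x in unit_sphere].

Definition inf_dist2 (B As : H -> H) (x : H) : R :=
  inf [set hnorm (B x - l *: As x) ^+ 2 | l in [set: R[i]]].

End Hilbert.

(* Main.v *)
Require Import Defs.
From HB Require Import structures.
From mathcomp Require Import all_boot all_order all_algebra.
From mathcomp Require Import all_classical all_reals all_analysis.
From mathcomp Require Import complex.
From mathcomp Require Import ring lra.
Import Order.TTheory GRing.Theory Num.Theory.
Import numFieldNormedType.Exports.
Local Open Scope ring_scope.
Local Open Scope classical_set_scope.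

Set Implicit Arguments. Unset Strict Implicit. Unset Printing Implicit Defensive.


Section Basic.
Local Open Scope complex_scope.
Variables (R : realType) (H : lmodType R[i]) (ip : H -> H -> R[i]).
Hypothesis hip : is_inner_product ip.

Lemma ipDl x y z : ip (x + y) z = ip x z + ip y z.
Proof. by case: hip => h _ _ _; have := h 1 x y z; rewrite scale1r mul1r. Qed.

Lemma ip0l z : ip 0 z = 0.
Proof.
have := ipDl 0 0 z; rewrite addr0 => /eqP; rewrite -subr_eq0.
by rewrite opprD addrA subrr sub0r oppr_eq0 => /eqP.
Qed.

Lemma ipZl a x z : ip (a *: x) z = a * ip x z.
Proof. by case: hip => h _ _ _; rewrite -[a *: x]addr0 h ip0l addr0. Qed.

Lemma ipC x y : ip x y = conjc (ip y x).
Proof. by case: hip. Qed.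

Lemma ipDr x y z : ip x (y + z) = ip x y + ip x z.
Proof. by rewrite ipC ipDl rmorphD /= -!ipC. Qed.

Lemma ipZr a x z : ip z (a *: x) = conjc a * ip z x.
Proof. by rewrite ipC ipZl rmorphM /= -ipC. Qed.

Lemma ip0r z : ip z 0 = 0.
Proof. by rewrite ipC ip0l conjc0. Qed.

Lemma ipNl x z : ip (- x) z = - ip x z.
Proof. by rewrite -scaleN1r ipZl mulN1r. Qed.

Lemma ipNr x z : ip z (- x) = - ip z x.
Proof. by rewrite ipC ipNl rmorphN /= -ipC. Qed.

Lemma ip_ge0 x : 0 <= ip x x.
Proof. by case: hip. Qed.

Lemma ipxxE x : ip x x = (hnorm ip x ^+ 2)%:C.
Proof.
have := ip_ge0 x; rewrite /hnorm; case: (ip x x) => a b.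
rewrite lecE /= => /andP[/eqP hb ha]; rewrite hb sqr_sqrtr //.
Qed.

Lemma hnorm_ge0 x : 0 <= hnorm ip x.
Proof. exact: sqrtr_ge0. Qed.

Lemma hnorm_eq0 x : hnorm ip x = 0 -> x = 0.
Proof. by case: hip => _ _ _ h hx; apply: h; rewrite ipxxE hx expr0n. Qed.

Lemma hnorm0 : hnorm ip 0 = 0.
Proof. by rewrite /hnorm ip0l /= sqrtr0. Qed.

End Basic.


Section CS.
Local Open Scope complex_scope.
Variables (R : realType) (H : lmodType R[i]) (ip : H -> H -> R[i]).
Hypothesis hip : is_inner_product ip.
Local Notation hn := (hnorm ip).

Lemma cs_aux (P Q z1 z2 : R) : 0 < Q ->
  0 <= P + (- (Q^-1 * z1 * z1) - Q^-1 * z2 * z2) +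
   (- (Q^-1 * z1 * z1) - Q^-1 * z2 * z2 +
    (Q^-1 * z1 * (Q^-1 * z1 * Q) + Q^-1 * z2 * (Q^-1 * z2 * Q))) ->
  z1 ^+ 2 + z2 ^+ 2 <= P * Q.
Proof.
move=> hQ h.
have e : P + (- (Q^-1 * z1 * z1) - Q^-1 * z2 * z2) +
   (- (Q^-1 * z1 * z1) - Q^-1 * z2 * z2 +
    (Q^-1 * z1 * (Q^-1 * z1 * Q) + Q^-1 * z2 * (Q^-1 * z2 * Q)))
   = P - (z1 ^+ 2 + z2 ^+ 2) / Q.
  have hQ0 : Q != 0 by rewrite gt_eqF.
  by field.
by move: h; rewrite e subr_ge0 ler_pdivrMr.
Qed.

Lemma CS x y : ComplexField.Normc.normc (ip x y) <= hn x * hn y.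
Proof.
have [hy0|hy0] := eqVneq (hn y) 0.
  by rewrite (hnorm_eq0 hip hy0) ip0r // hnorm0 // mulr0 ComplexField.Normc.normc0.
have Qpos : 0 < hn y ^+ 2 by rewrite exprn_gt0 // lt0r hy0 hnorm_ge0.
pose l : R[i] := ((hn y ^+ 2)^-1)%:C * ip x y.
pose v : H := x + (- l) *: y.
have := ip_ge0 hip v.
rewrite /v (ipDl hip) !(ipDr hip) !(ipZl hip) !(ipZr hip) !(ipxxE hip) (ipC hip y x) /l.
case: (ip x y) => z1 z2.
rewrite -!complexr0; simpc => /andP[_ /(cs_aux Qpos) h].
have hxy : 0 <= hn x * hn y by rewrite mulr_ge0 ?hnorm_ge0.
rewrite /= -[X in _ <= X](ger0_norm hxy) -sqrtr_sqr.
by rewrite ler_sqrt ?exprMn ?mulr_ge0 ?sqr_ge0 ?hnorm_ge0.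
Qed.

Lemma Re_le_normc (z : R[i]) : complex.Re z <= ComplexField.Normc.normc z.
Proof.
case: z => a b /=.
have h : `|a| <= Num.sqrt (a ^+ 2 + b ^+ 2).
  by rewrite -sqrtr_sqr ler_sqrt ?addr_ge0 ?sqr_ge0 // lerDl sqr_ge0.
exact: le_trans (ler_norm a) h.
Qed.

Lemma normc_ge0 (z : R[i]) : 0 <= ComplexField.Normc.normc z.
Proof. by case: z => a b /=; exact: sqrtr_ge0. Qed.

Lemma hnorm_sqr x : hn x ^+ 2 = complex.Re (ip x x).
Proof. by rewrite (ipxxE hip). Qed.

Lemma hnormZ (a : R[i]) x : hn (a *: x) = ComplexField.Normc.normc a * hn x.
Proof.
rewrite /hnorm (ipZl hip) (ipZr hip) (ipxxE hip).
case: a => a1 a2; rewrite -!complexr0; simpc => /=.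
rewrite -sqrtrM ?addr_ge0 ?sqr_ge0 //.
congr Num.sqrt; rewrite sqr_sqrtr ?sqrtr_ge0 //.
  by rewrite !mulrA -mulrDl.
by rewrite -hnorm_sqr sqr_ge0.
Qed.

Lemma ReipC x y : complex.Re (ip y x) = complex.Re (ip x y).
Proof. by rewrite (ipC hip y x); case: (ip x y). Qed.

Lemma hnormD_sqr x y :
  hn (x + y) ^+ 2 = hn x ^+ 2 + hn y ^+ 2 + 2 * complex.Re (ip x y).
Proof.
rewrite !hnorm_sqr (ipDl hip) !(ipDr hip) !raddfD /= (ReipC y x).
by rewrite mulr2n; ring.
Qed.

Lemma hnormD x y : hn (x + y) <= hn x + hn y.
Proof.
have e : hn (x + y) ^+ 2 = hn x ^+ 2 + hn y ^+ 2 + 2 * complex.Re (ip x y).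
  rewrite !hnorm_sqr (ipDl hip) !(ipDr hip) !raddfD /= (ReipC y x).
  by rewrite mulr2n; ring.
have := le_trans (Re_le_normc (ip x y)) (CS x y).
have := hnorm_ge0 ip x; have := hnorm_ge0 ip y; have := hnorm_ge0 ip (x + y).
move: e; move: (complex.Re (ip x y)) (hn x) (hn y) (hn (x + y)) => r a b c.
nra.
Qed.
End CS.

Section Ops.
Local Open Scope complex_scope.
Variables (R : realType) (H : lmodType R[i]) (ip : H -> H -> R[i]).
Hypothesis hip : is_inner_product ip.
Local Notation hn := (hnorm ip).
Local Notation normc := ComplexField.Normc.normc.

Lemma lin0 (T : H -> H) : bounded_op ip T -> T 0 = 0.
Proof.
case=> hT _; have := hT 1 0 0; rewrite !scale1r addr0 => e.
by apply: (@addrI _ (T 0)); rewrite addr0 -e.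
Qed.

Lemma linD (T : H -> H) : bounded_op ip T -> forall x y, T (x + y) = T x + T y.
Proof. by case=> hT _ x y; have := hT 1 x y; rewrite !scale1r. Qed.

Lemma linZ (T : H -> H) : bounded_op ip T -> forall a x, T (a *: x) = a *: T x.
Proof.
move=> hb a x; have := (proj1 hb) a x 0.
by rewrite !addr0 (lin0 hb) addr0.
Qed.

Lemma linN (T : H -> H) : bounded_op ip T -> forall x, T (- x) = - T x.
Proof. by move=> hb x; rewrite -scaleN1r (linZ hb) scaleN1r. Qed.

Lemma adj_bound (T S : H -> H) (K : R) :
  (forall x, hn (T x) <= K * hn x) -> is_adjoint ip T S ->
  forall y, hn (S y) <= K * hn y.
Proof.
move=> hT hTS y.
have e : hn (S y) ^+ 2 = complex.Re (ip (T (S y)) y).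
  by rewrite hTS hnorm_sqr.
have h1 := le_trans (Re_le_normc (ip (T (S y)) y)) (CS hip (T (S y)) y).
have h2 := hT (S y).
have h3 : 0 <= K * hn y := le_trans (hnorm_ge0 ip (T y)) (hT y).
have := hnorm_ge0 ip (S y); have := hnorm_ge0 ip y; have := hnorm_ge0 ip (T (S y)).
move: e h1 h2 h3; move: (complex.Re (ip (T (S y)) y)) (hn (S y)) (hn y) (hn (T (S y))) => r s t u.
nra.
Qed.

Lemma opnorm_ub (T : H -> H) (K : R) :
  (forall x, hn (T x) <= K * hn x) -> forall x, hn x = 1 -> hn (T x) <= opnorm ip T.
Proof.
move=> hT x hx; apply: ub_le_sup; last by exists x.
by exists K => _ [z hz <-]; have := hT z; rewrite hz mulr1.
Qed.

Lemma opnorm_hom (T : H -> H) : bounded_op ip T ->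
  forall z, hn (T z) <= opnorm ip T * hn z.
Proof.
move=> hb z; case: (hb) => _ [K hK].
have [hz0|hz0] := eqVneq (hn z) 0.
  by rewrite (hnorm_eq0 hip hz0) (lin0 hb) (hnorm0 hip) mulr0.
have hzp : 0 < hn z by rewrite lt_neqAle eq_sym hz0 (hnorm_ge0 ip z).
pose c : R := (hn z)^-1.
have hc : normc c%:C = c.
  rewrite /= expr0n /= addr0 sqrtr_sqr ger0_norm // /c invr_ge0 hnorm_ge0 //.
have h1 : hn (c%:C *: z) = 1 by rewrite (hnormZ hip) hc /c mulVf.
have := opnorm_ub hK h1; rewrite (linZ hb) (hnormZ hip) hc /c.
by rewrite ler_pdivrMl // mulrC.
Qed.
End Ops.


Section Core.
Local Open Scope complex_scope.
Variables (R : realType) (H : lmodType R[i]) (ip : H -> H -> R[i]).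
Hypothesis hip : is_inner_product ip.
Local Notation hn := (hnorm ip).
Local Notation normc := ComplexField.Normc.normc.
Variables (X : H -> H) (M : R).
Hypotheses (hXl : bounded_op ip X) (hXp : positive_op ip X).
Hypothesis hM : forall z, complex.Re (ip (X z) z) <= M * hn z ^+ 2.

Lemma possym u v : ip (X v) u = conjc (ip (X u) v).
Proof.
have p1 := hXp (u + v); have p2 := hXp (u + 'i *: v).
have p3 := hXp u; have p4 := hXp v.
move: p1 p2; rewrite !(linD hXl) (linZ hXl) !(ipDl hip) !(ipDr hip) !(ipZl hip) !(ipZr hip).
move: p3 p4; case: (ip (X u) u) => a1 a2; case: (ip (X v) v) => b1 b2.
case: (ip (X u) v) => c1 c2; case: (ip (X v) u) => d1 d2.
simpc.
move=> /andP[/eqP h1 _] /andP[/eqP h2 _] /andP[/eqP h3 _] /andP[/eqP h4 _].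
by congr Complex; lra.
Qed.

Lemma key u v : 4 * complex.Re (ip (X u) v) <=
  M * (hn u ^+ 2 + hn v ^+ 2 + 2 * complex.Re (ip u v)).
Proof.
have h1 := hM (u + v).
have h2 := hXp (u - v).
rewrite (hnormD_sqr hip) in h1.
move: h1 h2; rewrite !(linD hXl) (linN hXl) !(ipDl hip) !(ipDr hip) !(ipNl hip) !(ipNr hip).
rewrite (possym u v).
move: (hXp u) (hXp v).
case: (ip (X u) u) => a1 a2; case: (ip (X v) v) => b1 b2.
case: (ip (X u) v) => c1 c2; simpc => /=.
move=> _ _ h1 /andP[_ h2].
lra.
Qed.
End Core.

Section Core2.
Local Open Scope complex_scope.
Variables (R : realType) (H : lmodType R[i]) (ip : H -> H -> R[i]).
Hypothesis hip : is_inner_product ip.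
Local Notation hn := (hnorm ip).
Local Notation normc := ComplexField.Normc.normc.
Variables (X : H -> H) (M : R).
Hypotheses (hXl : bounded_op ip X) (hXp : positive_op ip X).
Hypothesis hM : forall z, complex.Re (ip (X z) z) <= M * hn z ^+ 2.
Hypothesis hM0 : 0 <= M.

Lemma F1 (p q : R) (w : R[i]) :
  complex.Re (p%:C * w^* * ((q * normc w)%:C^* * w)) = p * q * normc w * normc w ^+ 2.
Proof.
case: w => w1 w2; rewrite -!complexr0; simpc => /=.
rewrite sqr_sqrtr ?addr_ge0 ?sqr_ge0 //; ring.
Qed.

Lemma F2 (p q : R) (w : R[i]) :
  complex.Re (p%:C * w^* * ((p%:C * w^*)^* * (q ^+ 2)%:C)) = p ^+ 2 * q ^+ 2 * normc w ^+ 2.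
Proof.
case: w => w1 w2; rewrite -!complexr0; simpc => /=.
rewrite sqr_sqrtr ?addr_ge0 ?sqr_ge0 //; ring.
Qed.

Lemma F3 (p q : R) (w : R[i]) :
  complex.Re ((q * normc w)%:C * ((q * normc w)%:C^* * (p ^+ 2)%:C)) =
  p ^+ 2 * q ^+ 2 * normc w ^+ 2.
Proof.
case: w => w1 w2; rewrite -!complexr0; simpc => /=.
ring.
Qed.

Lemma dot_le (w1 w2 z1 z2 : R) :
  w1 * z1 + w2 * z2 <= Num.sqrt (w1 ^+ 2 + w2 ^+ 2) * Num.sqrt (z1 ^+ 2 + z2 ^+ 2).
Proof.
rewrite -sqrtrM ?addr_ge0 ?sqr_ge0 //.
apply: le_trans (ler_norm _) _.
rewrite -sqrtr_sqr ler_sqrt ?mulr_ge0 ?addr_ge0 ?sqr_ge0 //.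
have := sqr_ge0 (w1 * z2 - w2 * z1).
move=> h; nra.
Qed.

Lemma F4 (p q : R) (w z : R[i]) : 0 <= p * q ->
  complex.Re (p%:C * w^* * ((q * normc w)%:C^* * z)) <= p * q * normc w * (normc w * normc z).
Proof.
move=> hpq.
have -> : complex.Re (p%:C * w^* * ((q * normc w)%:C^* * z)) =
   p * q * normc w * (complex.Re w * complex.Re z + complex.Im w * complex.Im z).
  by case: w => w1 w2; case: z => z1 z2; rewrite -!complexr0; simpc => /=; ring.
apply: ler_wpM2l; first by rewrite mulr_ge0 // normc_ge0.
by case: w => w1 w2; case: z => z1 z2; apply: dot_le.
Qed.

Lemma real_final (p q r c MM x : R) : 0 < p -> 0 < q -> 0 <= r -> 0 <= c -> 0 <= MM ->
  x <= p * q * r * (r * c) ->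
  4 * (p * q * r * r ^+ 2) <= MM * (p ^+ 2 * q ^+ 2 * r ^+ 2 + p ^+ 2 * q ^+ 2 * r ^+ 2 + 2 * x) ->
  r <= MM * (p * q + c) / 2.
Proof.
move=> hp hq hr hc hMM hx h.
have [r0|rp] := eqVneq r 0.
  by rewrite r0 divr_ge0 // mulr_ge0 // addr_ge0 // mulr_ge0 // ltW.
have rpos : 0 < r by rewrite lt_neqAle eq_sym rp.
have hMx := ler_wpM2l hMM hx.
have k : 0 < 2 * p * q * r ^+ 2 by rewrite !mulr_gt0 // exprn_gt0.
have h2 : (2 * p * q * r ^+ 2) * (2 * r) <= (2 * p * q * r ^+ 2) * (MM * (p * q + c)).
  move: h hMx; move: (MM * x) => MMx; nra.
rewrite ler_pM2l // in h2.
lra.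
Qed.

Lemma rbound b a : normc (ip (X b) a) <= M * (hn a * hn b + normc (ip b a)) / 2.
Proof.
have rhs0 : 0 <= M * (hn a * hn b + normc (ip b a)) / 2.
  apply: divr_ge0 => //; apply: mulr_ge0 => //.
  apply: addr_ge0; last exact: normc_ge0.
  apply: mulr_ge0. exact: (hnorm_ge0 ip a). exact: (hnorm_ge0 ip b).
have [hb0|hb0] := eqVneq (hn b) 0.
  by move: rhs0; rewrite (hnorm_eq0 hip hb0) (lin0 hXl) (ip0l hip) ComplexField.Normc.normc0.
have [ha0|ha0] := eqVneq (hn a) 0.
  by move: rhs0; rewrite (hnorm_eq0 hip ha0) !(ip0r hip) ComplexField.Normc.normc0.
have hp : 0 < hn a by rewrite lt_neqAle eq_sym ha0 (hnorm_ge0 ip a).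
have hq : 0 < hn b by rewrite lt_neqAle eq_sym hb0 (hnorm_ge0 ip b).
have := key hip hXl hXp hM ((hn a)%:C * conjc (ip (X b) a) *: b)
   ((hn b * normc (ip (X b) a))%:C *: a).
rewrite !(hnorm_sqr hip) (linZ hXl) !(ipZl hip) !(ipZr hip) !(ipxxE hip).
move: hp hq; move: (hn a) (hn b) => p q hp hq.
rewrite F1 F2 F3.
move: (ip (X b) a) (ip b a) => w z h.
have hpq : 0 <= p * q by rewrite mulr_ge0 // ltW.
exact: (real_final hp hq (normc_ge0 w) (normc_ge0 z) hM0 (F4 w z hpq) h).
Qed.

Lemma real_pw (p q c r N I : R) : 0 < p -> 0 < q -> c <= p * q ->
  p ^+ 2 + q ^+ 2 <= N -> I <= q ^+ 2 - c ^+ 2 / p ^+ 2 -> r <= M * (p * q + c) / 2 ->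
  r <= M / 2 * (N - p / (2 * q) * I).
Proof.
move=> hp hq hc hN hI hr.
have hpq : 0 < p * q by rewrite mulr_gt0.
have hs : p / (2 * q) * I <= p * q / 2 - c ^+ 2 / (2 * (p * q)).
  have -> : p * q / 2 - c ^+ 2 / (2 * (p * q)) = p / (2 * q) * (q ^+ 2 - c ^+ 2 / p ^+ 2).
    by field; rewrite ?gt_eqF.
  by apply: ler_wpM2l => //; rewrite divr_ge0 // ?ltW // mulr_gt0.
have hk : p * q + c <= p ^+ 2 + q ^+ 2 - (p * q / 2 - c ^+ 2 / (2 * (p * q))).
  rewrite -subr_ge0.
  have -> : p ^+ 2 + q ^+ 2 - (p * q / 2 - c ^+ 2 / (2 * (p * q))) - (p * q + c) =
     (2 * (p * q) * (p - q) ^+ 2 + (p * q - c) ^+ 2) / (2 * (p * q)).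
    by field; rewrite ?gt_eqF.
  apply: divr_ge0; last lra.
  have := sqr_ge0 (p - q); have := sqr_ge0 (p * q - c); nra.
apply: (le_trans hr).
rewrite mulrAC; apply: ler_wpM2l; first by rewrite divr_ge0.
lra.
Qed.

Lemma inf_le (b a : H) : hn a != 0 ->
  inf [set hn (b - l *: a) ^+ 2 | l in [set: R[i]]] <=
  hn b ^+ 2 - normc (ip b a) ^+ 2 / hn a ^+ 2.
Proof.
move=> ha0.
have Qpos : 0 < hn a ^+ 2 by rewrite exprn_gt0 // lt_neqAle eq_sym ha0 (hnorm_ge0 ip a).
apply: le_trans (ge_inf _ _) _.
- by exists 0 => _ [l _ <-]; apply: sqr_ge0.
- by exists (((hn a ^+ 2)^-1)%:C * ip b a).
rewrite (hnorm_sqr hip) (ipDl hip) !(ipDr hip) !(ipNl hip) !(ipNr hip) !(ipZl hip) !(ipZr hip).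
rewrite !(ipxxE hip) (ipC hip a b).
move: Qpos; move: (hn a ^+ 2) (hn b ^+ 2) => Q P Qpos.
case: (ip b a) => z1 z2; rewrite -!complexr0; simpc => /=.
rewrite sqr_sqrtr ?addr_ge0 ?sqr_ge0 //.
rewrite le_eqVlt; apply/orP; left; apply/eqP.
by field; rewrite gt_eqF.
Qed.

Lemma pw b a N : hn a ^+ 2 + hn b ^+ 2 <= N ->
  normc (ip (X b) a) <=
  M / 2 * (N - hn a / (2 * hn b) * inf [set hn (b - l *: a) ^+ 2 | l in [set: R[i]]]).
Proof.
move=> hN.
have N0 : 0 <= N by apply: le_trans hN; rewrite addr_ge0 ?sqr_ge0.
have M2 : 0 <= M / 2 by rewrite divr_ge0.
have [hb0|hb0] := eqVneq (hn b) 0.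
  rewrite hb0 mulr0 invr0 mulr0 mul0r subr0.
  rewrite (hnorm_eq0 hip hb0) (lin0 hXl) (ip0l hip) ComplexField.Normc.normc0.
  by rewrite mulr_ge0.
have [ha0|ha0] := eqVneq (hn a) 0.
  rewrite ha0 mul0r mul0r subr0.
  rewrite (hnorm_eq0 hip ha0) (ip0r hip) ComplexField.Normc.normc0.
  by rewrite mulr_ge0.
have hp : 0 < hn a by rewrite lt_neqAle eq_sym ha0 (hnorm_ge0 ip a).
have hq : 0 < hn b by rewrite lt_neqAle eq_sym hb0 (hnorm_ge0 ip b).
apply: (real_pw hp hq _ hN (inf_le b ha0) (rbound b a)).
by rewrite mulrC; apply: CS.
Qed.
End Core2.


Section Final.
Variables (R : realType) (H : lmodType R[i]) (ip : H -> H -> R[i]).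
Hypothesis hip : is_inner_product ip.
Local Notation hn := (hnorm ip).
Local Notation normc := ComplexField.Normc.normc.

Lemma bound_nn (T : H -> H) : bounded_op ip T ->
  exists K, 0 <= K /\ forall x, hn (T x) <= K * hn x.
Proof.
case=> _ [K hK]; exists `|K|; split => // x.
apply: le_trans (hK x) _; apply: ler_wpM2r; first exact: hnorm_ge0.
exact: ler_norm.
Qed.

Lemma Nlem (A B As Bs : H -> H) : bounded_op ip A -> bounded_op ip B ->
  is_adjoint ip A As -> is_adjoint ip B Bs ->
  forall x, hn x = 1 ->
  hn (As x) ^+ 2 + hn (B x) ^+ 2 <= opnorm ip (fun y => A (As y) + Bs (B y)).
Proof.
move=> hA hB hAs hBs x hx.
have [KA [KA0 hKA]] := bound_nn hA.
have [KB [KB0 hKB]] := bound_nn hB.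
have hKAs := adj_bound hip hKA hAs.
have hKBs := adj_bound hip hKB hBs.
have hT : forall y, hn (A (As y) + Bs (B y)) <= (KA * KA + KB * KB) * hn y.
  move=> y; apply: le_trans (hnormD hip _ _) _.
  rewrite mulrDl -!mulrA; apply: lerD.
    by apply: le_trans (hKA _) _; apply: ler_wpM2l.
  by apply: le_trans (hKBs _) _; apply: ler_wpM2l.
apply: le_trans (opnorm_ub hT hx).
have e : hn (As x) ^+ 2 + hn (B x) ^+ 2 =
    complex.Re (ip (A (As x) + Bs (B x)) x).
  rewrite (ipDl hip) raddfD /= hAs (ReipC hip x (Bs (B x))) -hBs.
  by rewrite !(hnorm_sqr hip).
rewrite e; apply: le_trans (Re_le_normc _) _.
by apply: le_trans (CS hip _ _) _; rewrite hx mulr1.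
Qed.


Lemma inf_ge0' (b a : H) : 0 <= inf_dist2 ip (fun _ => b) (fun _ => a) b.
Proof.
apply: lb_le_inf; first by exists (hn (b - 0 *: a) ^+ 2), 0.
by move=> _ [l _ <-]; apply: sqr_ge0.
Qed.

Lemma g_ge0 (B As : H -> H) (k : R) y : 0 <= k ->
  0 <= hn (As y) / (k * hn (B y)) * inf_dist2 ip B As y.
Proof.
move=> hk; apply: mulr_ge0; last exact: (inf_ge0' (B y) (As y)).
by rewrite divr_ge0 ?mulr_ge0 ?hnorm_ge0.
Qed.
End Final.

Lemma lim_le (R : realType) (f g : nat -> R) (w L c K : R) :
  f @ \oo --> w -> g @ \oo --> L -> (forall n, f n <= K * (c - g n)) -> w <= K * (c - L).
Proof.
move=> hf hg hfg.
have h2 : (fun n => K * (c - g n)) @ \oo --> K * (c - L).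
  apply: cvgMl_tmp; apply: cvgB => //; exact: cvg_cst.
apply: (ler_cvg_to hf h2).
exact: nearW.
Qed.

Lemma lim_ge0 (R : realType) (g : nat -> R) (L : R) :
  g @ \oo --> L -> (forall n, 0 <= g n) -> 0 <= L.
Proof.
move=> hg hg0.
have h0 : (fun _ : nat => (0 : R)) @ \oo --> (0 : R) by exact: cvg_cst.
apply: (ler_cvg_to h0 hg).
exact: nearW.
Qed.


Unset Implicit Arguments.

Theorem theorem2p15 (R : realType) (H : lmodType R[i]) (ip : H -> H -> R[i])
    (hip : is_inner_product ip) (hcompl : hcomplete ip)
    (A B X As Bs : H -> H)
    (hA : bounded_op ip A) (hB : bounded_op ip B) (hX : bounded_op ip X)
    (hAs : is_adjoint ip A As) (hBs : is_adjoint ip B Bs)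
    (hB0 : exists x : H, B x <> 0) (hXpos : positive_op ip X) :
  (forall (x : nat -> H) (L : R),
      (forall n, hnorm ip (x n) = 1) ->
      (fun n => ComplexField.Normc.normc (ip (A (X (B (x n)))) (x n))) @ \oo -->
        numrad ip (fun y => A (X (B y))) ->
      (fun n => hnorm ip (As (x n)) / (2 * hnorm ip (B (x n)))
                * inf_dist2 ip B As (x n)) @ \oo --> L ->
      numrad ip (fun y => A (X (B y)))
        <= opnorm ip X / 2 * (opnorm ip (fun y => A (As y) + Bs (B y)) - L)
      /\ opnorm ip X / 2 * (opnorm ip (fun y => A (As y) + Bs (B y)) - L)
        <= opnorm ip X / 2 * opnorm ip (fun y => A (As y) + Bs (B y)))
  /\
  (forall (x : nat -> H) (L : R),
      (forall n, hnorm ip (x n) = 1) ->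
      (fun n => ComplexField.Normc.normc (ip (A (B (x n))) (x n))) @ \oo -->
        numrad ip (fun y => A (B y)) ->
      (fun n => hnorm ip (As (x n)) / (4 * hnorm ip (B (x n)))
                * inf_dist2 ip B As (x n)) @ \oo --> L ->
      numrad ip (fun y => A (B y))
        <= 1 / 2 * opnorm ip (fun y => A (As y) + Bs (B y)) - L
      /\ 1 / 2 * opnorm ip (fun y => A (As y) + Bs (B y)) - L
        <= 1 / 2 * opnorm ip (fun y => A (As y) + Bs (B y))).
Proof.
set N := opnorm ip (fun y => A (As y) + Bs (B y)).
have hN := Nlem hip hA hB hAs hBs.
split.
  move=> x L hx hf hg.
  have [KX [KX0 hKX]] := bound_nn hX.
  set M := opnorm ip X.
  have hM0 : 0 <= M := le_trans (hnorm_ge0 ip (X (x 0%N))) (opnorm_ub hKX (hx 0%N)).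
  have hM : forall z, complex.Re (ip (X z) z) <= M * hnorm ip z ^+ 2.
    move=> z; apply: le_trans (Re_le_normc _) _; apply: le_trans (CS hip _ _) _.
    rewrite expr2 mulrA; apply: ler_wpM2r; first exact: hnorm_ge0.
    exact: opnorm_hom.
  have hL0 : 0 <= L by apply: (lim_ge0 hg) => n; apply: g_ge0.
  split.
    apply: (lim_le hf hg) => n.
    rewrite hAs; exact: (pw hip hX hXpos hM hM0 (hN _ (hx n))).
  by apply: ler_wpM2l; [rewrite divr_ge0 | rewrite lerBlDr lerDl].
move=> x L hx hf hg.
have hI : bounded_op ip id.
  by split => //; exists 1 => y; rewrite mul1r.
have hIp : positive_op ip id by move=> y; exact: ip_ge0.
have hM : forall z, complex.Re (ip (id z) z) <= 1 * hnorm ip z ^+ 2.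
  by move=> z; rewrite mul1r (hnorm_sqr hip).
have hL0 : 0 <= L by apply: (lim_ge0 hg) => n; apply: g_ge0.
split; last by rewrite lerBlDr lerDl.
have e : forall n, 1 / 2 * (N - hnorm ip (As (x n)) / (2 * hnorm ip (B (x n))) * inf_dist2 ip B As (x n))
   = 1 / 2 * N - hnorm ip (As (x n)) / (4 * hnorm ip (B (x n))) * inf_dist2 ip B As (x n).
  move=> n; rewrite !invfM.
  move: (hnorm ip (As (x n))) ((hnorm ip (B (x n)))^-1) (inf_dist2 ip B As (x n)) => a b c.
  by field.
rewrite -[X in _ <= X]mul1r.
apply: (lim_le hf hg) => n /=; rewrite [X in _ <= X]mul1r -e hAs.
exact: (pw hip hI hIp hM ler01 (hN _ (hx n))).
Qed.
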